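(* For every $c\in\mathbb{C}$, the orbifold $(\mathcal{W}^c_3)^{\mathbb{Z}_2}$ is strongly generated by $\{L,\ U_{2n,0}\ |\ n\ge 0\}$, where $U_{i,j}=\,:(\partial^iW)(\partial^jW):$.
   Context: For vertex algebra elements $a,b$, write $a(z)b(w)\sim\sum_{n\ge0}(a\circ_n b)(w)(z-w)^{-n-1}$ and $:ab:$ for the normally ordered product; iterated products are nested to the right. For $c\neq-\frac{22}{5}$, $\mathcal{W}^c_3$ is the vertex algebra strongly generated by a Virasoro field $L$ and a weight $3$ primary field $W$ with OPEs $L(z)L(w)\sim \frac c2(z-w)^{-4}+2L(w)(z-w)^{-2}+\partial L(w)(z-w)^{-1}$, $L(z)W(w)\sim 3W(w)(z-w)^{-2}+\partial W(w)(z-w)^{-1}$, $W(z)W(w)\sim \frac c3(z-w)^{-6}+2L(w)(z-w)^{-4}+\partial L(w)(z-w)^{-3}+\big(\frac{32}{22+5c}:LL:+\frac{3(c-2)}{2(22+5c)}\partial^2L\big)(w)(z-w)^{-2}+\big(\frac{32}{22+5c}:(\partial L)L:+\frac{c-2}{3(22+5c)}\partial^3L\big)(w)(z-w)^{-1}$. For $c=-\frac{22}{5}$, $W$ is rescaled by $\sqrt{22+5c}$ and the limit $c\to-\frac{22}{5}$ taken, giving $W(z)W(w)\sim(32:LL:-\frac{48}{5}\partial^2L)(w)(z-w)^{-2}+(32:(\partial L)L:-\frac{32}{15}\partial^3L)(w)(z-w)^{-1}$. For every $c$, $\mathcal{W}^c_3$ is freely generated by $L,W$ (PBW basis of ordered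 monomials in derivatives of $L$ and $W$). $\mathbb{Z}_2$ acts by the automorphism $\theta(L)=L$, $\theta(W)=-W$, and $(\mathcal{W}^c_3)^{\mathbb{Z}_2}$ is the fixed-point subalgebra. A set $S$ strongly generates $\mathcal{A}$ if $\mathcal{A}$ is spanned by normally ordered monomials in elements of $S$ and their derivatives. *)

(* Defs.v *)
From HB Require Import structures.
From mathcomp Require Import all_boot all_order all_algebra.
From mathcomp Require Import reals complex.
Set Implicit Arguments. Unset Strict Implicit. Unset Printing Implicit Defensive.
Import Order.TTheory GRing.Theory Num.Theory.
Local Open Scope ring_scope.

Section VA.
Variable K : fieldType.
Variable V : lmodType K.
(* Y n a b  is the n-th product  a_(n) b,  n : int *)
Variables (vac : V) (Y : int -> V -> V -> V).

Definition binz (n : int) (j : nat) : K :=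
  (\prod_(i < j) ((n - (i : nat)%:Z)%:~R : K)) / (j`!)%:R.

Definition borch_lhs (a b c : V) (m n k : int) (N : nat) : V :=
  \sum_(j < N) binz m j *: Y (m + k - (j : nat)%:Z) (Y (n + (j : nat)%:Z) a b) c.
Definition borch_rhs (a b c : V) (m n k : int) (N : nat) : V :=
  \sum_(j < N) ((-1) ^+ j * binz n j) *:
     (Y (m + n - (j : nat)%:Z) a (Y (k + (j : nat)%:Z) b c)
      - ((-1 : K) ^ n) *: Y (n + k - (j : nat)%:Z) b (Y (m + (j : nat)%:Z) a c)).

Definition vertex_algebra : Prop :=
  [/\
      (forall n a, linear (Y n a)) /\
      (forall n b, linear (fun a => Y n a b)),
      (forall a b, exists N : int, forall n, N <= n -> Y n a b = 0),
      (forall n a, Y n vac a = (if n == -1 then a else 0)),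
      (forall a, Y (-1) a vac = a) /\ (forall (n : nat) a, Y n%:Z a vac = 0) &
      (* Borcherds identity (all sums are finite: the truncated sums
         eventually agree with the full sums) *)
      (forall a b c m n k, exists N0 : nat, forall N, (N0 <= N)%N ->
          borch_lhs a b c m n k N = borch_rhs a b c m n k N)].

Definition der (a : V) : V := Y (-2) a vac.
Definition nop (a b : V) : V := Y (-1) a b.

(* OPE  a(z)b(w) ~ sum_n cs_n (w) (z-w)^(-n-1):  a_(n) b = cs_n for all n >= 0
   (and 0 beyond the list) *)
Definition ope (a b : V) (cs : seq V) : Prop :=
  forall n : nat, Y n%:Z a b = nth 0 cs n.

Definition nmono (I : Type) (g : I -> V) (s : seq (I * nat)) : V :=
  foldr (fun p acc => nop (iter p.2 der (g p.1)) acc) vac s.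

Definition in_strong_span (I : Type) (g : I -> V) (x : V) : Prop :=
  exists t : seq (K * seq (I * nat)), x = \sum_(p <- t) p.1 *: nmono g p.2.

Definition va_automorphism (theta : V -> V) : Prop :=
  [/\ linear theta, bijective theta, theta vac = vac &
      forall n a b, theta (Y n a b) = Y n (theta a) (theta b)].
End VA.

Section W3.
Variable K : fieldType.
Variable V : lmodType K.
Variables (vac : V) (Y : int -> V -> V -> V) (c : K) (L W : V).

Notation der := (der vac Y).
Notation nop := (nop Y).

Definition W3_ope : Prop :=
  [/\ ope Y L L [:: der L; 2 *: L; 0; (c / 2) *: vac],
      ope Y L W [:: der W; 3 *: W] &
      if 22 + 5 * c != 0 then
        ope Y W W
          [:: (32 / (22 + 5 * c)) *: nop (der L) L
              + ((c - 2) / (3 * (22 + 5 * c))) *: iter 3 der L;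
              (32 / (22 + 5 * c)) *: nop L L
              + ((3 * (c - 2)) / (2 * (22 + 5 * c))) *: iter 2 der L;
              der L; 2 *: L; 0; (c / 3) *: vac]
      else (* c = -22/5, W rescaled by sqrt(22+5c), limit taken *)
        ope Y W W
          [:: 32 *: nop (der L) L - (32 / 15) *: iter 3 der L;
              32 *: nop L L - (48 / 5) *: iter 2 der L]].

Definition W3gen (b : bool) : V := if b then W else L.

Definition pbw_le (p q : bool * nat) : bool :=
  (~~ p.1 && q.1) || ((p.1 == q.1) && (p.2 <= q.2)%N).
Definition pbw_ordered (s : seq (bool * nat)) : bool := sorted pbw_le s.

Definition W3_PBW_basis : Prop :=
  (forall x : V, exists t : seq (K * seq (bool * nat)),
      all (fun p => pbw_ordered p.2) t /\
      x = \sum_(p <- t) p.1 *: nmono vac Y W3gen p.2) /\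
  (forall (t : seq (seq (bool * nat))) (coef : seq (bool * nat) -> K),
      uniq t -> all pbw_ordered t ->
      \sum_(s <- t) coef s *: nmono vac Y W3gen s = 0 ->
      forall s, s \in t -> coef s = 0).

Definition is_W3 : Prop := [/\ vertex_algebra vac Y, W3_ope & W3_PBW_basis].

Definition U (i j : nat) : V := nop (iter i der W) (iter j der W).

Definition orb_gen (o : option nat) : V :=
  match o with None => L | Some n => U n.*2 0 end.
End W3.

(* Main.v *)
Require Import Defs.
From HB Require Import structures.
From mathcomp Require Import all_boot all_order all_algebra.
From mathcomp Require Import reals complex.
From mathcomp Require Import zify ring lra.
Set Implicit Arguments. Unset Strict Implicit. Unset Printing Implicit Defensive.
Import Order.TTheory GRing.Theory Num.Theory.
Local Open Scope ring_scope.

Section Lin.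
Variable K : fieldType.
Variable V : lmodType K.
Variable f : V -> V.
Hypothesis Hf : linear f.

Lemma lin0 : f 0 = 0.
Proof.
have H := Hf 1 0 0; rewrite !scale1r !addr0 in H.
by apply: (addrI (f 0)); rewrite addr0 -H.
Qed.
Lemma linD x y : f (x + y) = f x + f y.
Proof. by move: (Hf 1 x y); rewrite !scale1r. Qed.
Lemma linZ a x : f (a *: x) = a *: f x.
Proof. by move: (Hf a x 0); rewrite !addr0 lin0 addr0. Qed.
Lemma linN x : f (- x) = - f x.
Proof. by rewrite -scaleN1r linZ scaleN1r. Qed.
Lemma linB x y : f (x - y) = f x - f y.
Proof. by rewrite linD linN. Qed.
Lemma lin_sum I (r : seq I) (P : pred I) (F : I -> V) :
  f (\sum_(i <- r | P i) F i) = \sum_(i <- r | P i) f (F i).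
Proof. exact: (big_morph f linD lin0). Qed.
End Lin.

Section Gen.
Variable K : numFieldType.
Variable V : lmodType K.
Variables (vac : V) (Y : int -> V -> V -> V).
Hypothesis HVA : vertex_algebra vac Y.

Lemma YlinR n a : linear (Y n a).
Proof. by case: HVA => -[]. Qed.
Lemma YlinL n b : linear (fun a => Y n a b).
Proof. by case: HVA => -[]. Qed.
Lemma Yvac n a : Y n vac a = if n == -1 then a else 0.
Proof. by case: HVA. Qed.
Lemma Yvac1 a : Y (-1) vac a = a.
Proof. by rewrite Yvac. Qed.
Lemma Ycreate a : Y (-1) a vac = a.
Proof. by case: HVA => _ _ _ []. Qed.
Lemma Ypos_vac (n : nat) a : Y n a vac = 0.
Proof. by case: HVA => _ _ _ []. Qed.
Lemma Yborch a b c m n k : exists N0 : nat, forall N, (N0 <= N)%N ->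
  borch_lhs Y a b c m n k N = borch_rhs Y a b c m n k N.
Proof. by case: HVA. Qed.

Lemma YR0 n a : Y n a 0 = 0. Proof. exact: lin0 (YlinR n a). Qed.
Lemma YL0 n b : Y n 0 b = 0. Proof. exact: (lin0 (YlinL n b)). Qed.
Lemma YRD n a x y : Y n a (x + y) = Y n a x + Y n a y. Proof. exact: (linD (YlinR n a) x y). Qed.
Lemma YLD n b x y : Y n (x + y) b = Y n x b + Y n y b. Proof. exact: (linD (YlinL n b) x y). Qed.
Lemma YRZ n a k x : Y n a (k *: x) = k *: Y n a x. Proof. exact: (linZ (YlinR n a) k x). Qed.
Lemma YLZ n b k x : Y n (k *: x) b = k *: Y n x b. Proof. exact: (linZ (YlinL n b) k x). Qed.
Lemma YRB n a x y : Y n a (x - y) = Y n a x - Y n a y. Proof. exact: (linB (YlinR n a) x y). Qed.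
Lemma YLB n b x y : Y n (x - y) b = Y n x b - Y n y b. Proof. exact: (linB (YlinL n b) x y). Qed.

Lemma binz0 n : binz K n 0 = 1.
Proof. by rewrite /binz big_ord0 fact0 divr1. Qed.
Lemma binz_0S j : binz K 0 j.+1 = 0.
Proof. by rewrite /binz big_ord_recl /= subr0 mul0r mul0r. Qed.
Lemma binz1 n : binz K n 1 = n%:~R.
Proof. by rewrite /binz big_ord1 /= subr0 factS fact0 muln1 divr1. Qed.

Lemma fact_neq0 n : (n`!%:R : K) != 0.
Proof. by rewrite pnatr_eq0 -lt0n fact_gt0. Qed.

Lemma prod_m2 j : \prod_(i < j) ((-2 - (i : nat)%:Z)%:~R : K) = (-1) ^+ j * (j.+1)`!%:R.
Proof.
elim: j => [|j IH]; first by rewrite big_ord0 expr0 mul1r factS fact0 muln1.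
rewrite big_ord_recr /= IH exprS [(j.+2)`!]factS natrM.
have -> : ((-2 - (j:int)) %:~R : K) = - (j.+2)%:R.
  have -> : (-2 - (j:int)) = - (j.+2)%:Z by lia.
  by rewrite mulrNz.
move: ((-1) ^+ j) ((j.+1)`!%:R) => A B. ring.
Qed.

Lemma prod_m1 j : \prod_(i < j) ((-1 - (i : nat)%:Z)%:~R : K) = (-1) ^+ j * j`!%:R.
Proof.
elim: j => [|j IH]; first by rewrite big_ord0 expr0 mul1r fact0.
rewrite big_ord_recr /= IH exprS [(j.+1)`!]factS natrM.
have -> : ((-1 - (j:int)) %:~R : K) = - (j.+1)%:R.
  have -> : (-1 - (j:int)) = - (j.+1)%:Z by lia.
  by rewrite mulrNz.
move: ((-1) ^+ j) (j`!%:R) => A B. ring.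
Qed.

Lemma sign_sq j : ((-1) ^+ j * (-1) ^+ j : K) = 1.
Proof.
elim: j => [|j IH]; first by rewrite mulr1.
by rewrite !exprS mulrACA IH mulN1r opprK mulr1.
Qed.

Lemma binz_m1 j : binz K (-1) j = (-1) ^+ j.
Proof. by rewrite /binz prod_m1 mulfK // fact_neq0. Qed.

Lemma binz_m2 j : (-1) ^+ j * binz K (-2) j = (j.+1)%:R.
Proof.
rewrite /binz prod_m2 factS natrM !mulrA sign_sq mul1r mulfK //.
exact: fact_neq0.
Qed.

Lemma borch_m0 a b c n k : exists N0 : nat, forall N, (N0 <= N)%N ->
  Y k (Y n a b) c = \sum_(j < N) ((-1) ^+ j * binz K n j) *:
     (Y (n - (j:nat)%:Z) a (Y (k + (j:nat)%:Z) b c)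
      - ((-1 : K) ^ n) *: Y (n + k - (j:nat)%:Z) b (Y (j:nat)%:Z a c)).
Proof.
have [N0 H] := Yborch a b c 0 n k.
exists N0.+1 => N hN; have := H N (ltnW hN).
rewrite /borch_lhs /borch_rhs; case: N hN => // N _.
rewrite big_ord_recl binz0 scale1r big1 ?addr0; last first.
  by move=> i _; rewrite binz_0S scale0r.
rewrite add0r => ->; apply: eq_bigr => j _.
by rewrite !add0r.
Qed.

Lemma borch_n0 a b c m k : exists N0 : nat, forall N, (N0 <= N)%N ->
  Y m a (Y k b c) - Y k b (Y m a c) =
  \sum_(j < N) binz K m j *: Y (m + k - (j:nat)%:Z) (Y (j:nat)%:Z a b) c.
Proof.
have [N0 H] := Yborch a b c m 0 k.
exists N0.+1 => N hN; have := H N (ltnW hN).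
rewrite /borch_lhs /borch_rhs; case: N hN => // N _.
rewrite [in RHS]big_ord_recl binz0 mulr1 expr0 scale1r.
rewrite [in RHS]big1 ?addr0; last first.
  by move=> i _; rewrite binz_0S mulr0 scale0r.
rewrite add0r expr0z scale1r => <-.
by apply: eq_bigr => j _; rewrite add0r.
Qed.

Lemma sum_single N (F : 'I_N -> V) (p : nat) (hp : (p < N)%N) :
  (forall j : 'I_N, (j : nat) != p -> F j = 0) -> \sum_(j < N) F j = F (Ordinal hp).
Proof.
move=> H; rewrite (bigD1 (Ordinal hp)) //= big1 ?addr0 // => j hj.
Qed.

Lemma Yvac_ne n a : n != -1 -> Y n vac a = 0.
Proof. by rewrite Yvac => /negbTE ->. Qed.

Notation der := (der vac Y).
Notation nop := (nop Y).

Lemma sgn_m2 : ((-1 : K) ^ (-2 : int)) = 1.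
Proof. by rewrite /exprz /= expr2 mulrNN mulr1 invr1. Qed.
Lemma sgn_m1 : ((-1 : K) ^ (-1 : int)) = -1.
Proof. by rewrite /exprz /= expr1 invrN invr1. Qed.

Lemma transl k a c : Y k (der a) c = - (k%:~R) *: Y (k - 1) a c.
Proof.
have [N0 H] := borch_m0 a vac c (-2) k.
case: k H => [[|p]|p] H.
- rewrite mulr0z oppr0 scale0r (H N0) // big1 // => j _.
  rewrite Yvac_ne; last by apply/eqP; lia.
  rewrite YR0 Yvac_ne; last by apply/eqP; lia.
  by rewrite scaler0 subr0 scaler0.
- have hp : (p < maxn N0 p.+1)%N by rewrite leq_max ltnSn orbT.
  rewrite /der (H (maxn N0 p.+1)) ?leq_maxl // (sum_single hp) /=; last first.
    move=> j hj; rewrite Yvac_ne; last by apply/eqP; lia.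
    rewrite YR0 sub0r Yvac_ne; last by apply/eqP; move: hj => /eqP; lia.
    by rewrite scaler0 oppr0 scaler0.
  rewrite Yvac_ne; last by apply/eqP; lia.
  rewrite YR0 sub0r.
  have -> : (-2 + Posz p.+1 - Posz p) = -1 by lia.
  have -> : (Posz p.+1 - 1) = p by lia.
  by rewrite Yvac1 sgn_m2 scale1r binz_m2 scalerN scaleNr.
- have hp : (p < maxn N0 p.+1)%N by rewrite leq_max ltnSn orbT.
  rewrite /der (H (maxn N0 p.+1)) ?leq_maxl // (sum_single hp) /=; last first.
    move=> j hj; rewrite Yvac_ne; last by apply/eqP; move: hj => /eqP; lia.
    rewrite YR0 Yvac_ne; last by apply/eqP; lia.
    by rewrite scaler0 subr0 scaler0.
  rewrite [Y (-2 + _ - _) vac _]Yvac_ne; last by apply/eqP; lia.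
  rewrite scaler0 subr0.
  have -> : (Negz p + Posz p) = -1 by lia.
  have -> : (-2 - Posz p) = Negz p - 1 by lia.
  rewrite Yvac1 binz_m2 NegzE mulrNz opprK.
  done.
Qed.

Lemma deriv n a b : der (Y n a b) = Y n (der a) b + Y n a (der b).
Proof.
have [N0 H] := borch_m0 a b vac n (-2).
rewrite /der (H (maxn N0 2)) ?leq_maxl //.
have : (2 <= maxn N0 2)%N by rewrite leq_maxr.
case: (maxn N0 2) => [|[|N]] // _.
rewrite big_ord_recl big_ord_recl /= big1; last first.
  move=> i _; rewrite Ypos_vac YR0 scaler0 subr0.
  have -> : (-2 + Posz (bump 0 (bump 0 i))) = Posz i.
    by rewrite /bump /=; lia.
  by rewrite Ypos_vac YR0 scaler0.
rewrite !Ypos_vac !YR0 !scaler0 !subr0 addr0 expr0 mul1r binz0 scale1r.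
have -> : (-2 + Posz (bump 0 0)) = -1 by rewrite /bump /=; lia.
rewrite /bump /= Ycreate expr1 binz1 (transl n a b) mulN1r scaleNr addrC.
done.
Qed.

Lemma Ypos_vac' n a : (0 <= n) -> Y n a vac = 0.
Proof. by case: n => // n _; rewrite Ypos_vac. Qed.

Lemma negmode_gen r p a c :
  Y (Negz p) (iter r der a) c = ((p + r)`!%:R / p`!%:R) *: Y (Negz (p + r)) a c.
Proof.
elim: r p => [|r IH] p.
  by rewrite addn0 divff ?fact_neq0 // scale1r.
rewrite iterS transl.
have -> : Negz p - 1 = Negz p.+1 by rewrite !NegzE; lia.
rewrite IH scalerA addnS -addSn.
congr (_ *: _).
rewrite NegzE opprK [(p.+1)`!]factS natrM.
have h1 := fact_neq0 p.
have h2 : (p.+1%:R : K) != 0 by rewrite pnatr_eq0.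

field. by rewrite h1 addrC natr1 h2.
Qed.

Lemma negmode r a c : Y (Negz r) a c = (r`!%:R)^-1 *: Y (-1) (iter r der a) c.
Proof.
rewrite (negmode_gen r 0 a c) add0n fact0 divr1 scalerA mulVf ?scale1r //.
exact: fact_neq0.
Qed.

Lemma negmode_vac r a : Y (Negz r) a vac = (r`!%:R)^-1 *: iter r der a.
Proof. by rewrite negmode Ycreate. Qed.

Lemma posmode_der (P : V -> Prop) (P0 : P 0) (PZ : forall k x, P x -> P (k *: x))
  a c : (forall j : nat, P (Y j a c)) -> forall k (j : nat), P (Y j (iter k der a) c).
Proof.
move=> H k; elim: k => [|k IH] j; first exact: H.
rewrite iterS transl; case: j => [|j].
  by rewrite mulr0z oppr0 scale0r.
have -> : (Posz j.+1 - 1) = j by lia.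
exact: PZ.
Qed.

Lemma skew a b (i : nat) : exists N0 : nat, forall N, (N0 <= N)%N ->
  Y i b a = - ((-1) ^+ i) *: \sum_(j < N) binz K (-1) j *: Y (Negz j) (Y (i + j)%N a b) vac.
Proof.
have [N0 H] := Yborch a b vac (-1) i 0.
exists N0.+1 => N hN; have := H N (ltnW hN).
rewrite /borch_lhs /borch_rhs; case: N hN => // N _.
rewrite [in RHS]big_ord_recl [in RHS]big1; last first.
  move=> j _; rewrite /bump /=.
  have -> : (0 + Posz (1 + j)) = Posz (1 + j) by lia.
  have -> : (-1 + Posz (1 + j)) = Posz j by lia.
  by rewrite !Ypos_vac !YR0 scaler0 subrr scaler0.
rewrite addr0 expr0 binz0 mulr1 scale1r add0r Ypos_vac YR0 sub0r addr0 subr0 Ycreate.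
change ((-1 : K) ^ (Posz i)) with ((-1 : K) ^+ i).
rewrite addr0 => E.
have -> : Y i b a = - ((-1) ^+ i) *: (- ((-1) ^+ i) *: Y i b a).
  by rewrite scalerA mulrNN sign_sq scale1r.
rewrite -scaleNr in E; rewrite -E; congr (_ *: _); apply: eq_bigr => j _.
congr (_ *: Y _ _ _); first by rewrite NegzE; lia.
Qed.

Lemma YLsum n b I (r : seq I) (G : I -> V) :
  Y n (\sum_(i <- r) G i) b = \sum_(i <- r) Y n (G i) b.
Proof. exact: (big_morph (fun a => Y n a b) (YLD n b) (YL0 n b)). Qed.
End Gen.

Section W3.
Variable K : numFieldType.
Variable V : lmodType K.
Variables (vac : V) (Y : int -> V -> V -> V).
Hypothesis HVA : vertex_algebra vac Y.
Variables (c : K) (L W : V).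
Hypothesis HOPE : W3_ope vac Y c L W.

Notation der := (der vac Y).
Notation nop := (nop Y).
Notation gen := (W3gen L W).
Notation nm := (nmono vac Y gen).

Definition wt (b : bool) : nat := if b then 3%N else 2%N.
Definition deg (s : seq (bool * nat)) : nat := sumn (map (fun p => wt p.1) s).

Lemma wt_ge2 b : (2 <= wt b)%N. Proof. by case: b. Qed.
Lemma deg_cons b k s : deg ((b, k) :: s) = (wt b + deg s)%N. Proof. by []. Qed.

Definition F (e : nat) (x : V) : Prop :=
  exists t : seq (K * seq (bool * nat)),
    all (fun p => deg p.2 <= e)%N t /\ x = \sum_(p <- t) p.1 *: nm p.2.

Lemma F0 e : F e 0.
Proof. by exists [::]; rewrite big_nil. Qed.
Lemma FD e x y : F e x -> F e y -> F e (x + y).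
Proof.
move=> [t1 [h1 ->]] [t2 [h2 ->]]; exists (t1 ++ t2).
by rewrite all_cat h1 h2 big_cat.
Qed.
Lemma FZ e k x : F e x -> F e (k *: x).
Proof.
move=> [t [h ->]]; exists (map (fun p => (k * p.1, p.2)) t); split.
  by rewrite all_map.
by rewrite big_map scaler_sumr; apply: eq_bigr => p _; rewrite scalerA.
Qed.
Lemma FN e x : F e x -> F e (- x).
Proof. by move=> h; rewrite -scaleN1r; apply: FZ. Qed.
Lemma FB e x y : F e x -> F e y -> F e (x - y).
Proof. by move=> hx hy; apply: FD => //; apply: FN. Qed.
Lemma Fmono e e' x : (e <= e')%N -> F e x -> F e' x.
Proof.
move=> le [t [h ->]]; exists t; split => //.
by apply: sub_all h => p /= hp; apply: leq_trans le.
Qed.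
Lemma Fnm s : F (deg s) (nm s).
Proof. by exists [:: (1, s)]; rewrite /= leqnn big_seq1 scale1r. Qed.
Lemma Fnm' e s : (deg s <= e)%N -> F e (nm s).
Proof. by move=> h; apply: Fmono h (Fnm s). Qed.
Lemma Fsum N e (G : 'I_N -> V) : (forall j, F e (G j)) -> F e (\sum_(j < N) G j).
Proof. by move=> H; apply: big_rec => [|j x _ Hx]; [exact: F0 | exact: FD]. Qed.
Lemma Fsum_seq (I : eqType) (r : seq I) e (G : I -> V) :
  (forall i, i \in r -> F e (G i)) -> F e (\sum_(i <- r) G i).
Proof.
move=> H; rewrite big_seq; apply: big_rec => [|j x hj Hx]; [exact: F0 |].
by apply: FD => //; apply: H.
Qed.

Lemma F_lin (f : V -> V) (Hf : linear f) e e' :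
  (forall s, (deg s <= e)%N -> F e' (f (nm s))) -> forall x, F e x -> F e' (f x).
Proof.
move=> H x [t [h ->]]; rewrite (lin_sum Hf); apply: Fsum_seq => p hp.
rewrite (linZ Hf); apply: FZ; apply: H.
by move/allP: h => /(_ p hp).
Qed.

Lemma Fcons b k e x : F e x -> F (wt b + e) (nop (iter k der (gen b)) x).
Proof.
apply: (F_lin (YlinR HVA (-1) _)) => s hs.
by apply: (Fnm' (s := (b, k) :: s)); rewrite deg_cons leq_add2l.
Qed.

Lemma nm_gen b k : nm [:: (b, k)] = iter k der (gen b).
Proof. by rewrite /= /Defs.nop (Ycreate HVA). Qed.

Lemma Fgen b k : F (wt b) (iter k der (gen b)).
Proof. by rewrite -nm_gen; apply: Fnm' => /=; rewrite /deg /= addn0. Qed.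

Lemma der_nm s : F (deg s) (der (nm s)).
Proof.
elim: s => [|[b k] s IH] /=.
  rewrite /Defs.der (Yvac_ne HVA) //; exact: F0.
rewrite /Defs.nop (deriv HVA); apply: FD.
  by have := Fnm ((b, k.+1) :: s).
exact: Fcons.
Qed.

Lemma Fder e x : F e x -> F e (der x).
Proof.
apply: (F_lin (YlinL HVA (-2) vac)) => s hs.
exact: Fmono hs (der_nm s).
Qed.

Lemma Fiter e k x : F e x -> F e (iter k der x).
Proof. by elim: k => [|k IH] //= h; apply: Fder; apply: IH. Qed.

Lemma Fnegvac e r x : F e x -> F e (Y (Negz r) x vac).
Proof. by move=> h; rewrite (negmode_vac HVA); apply: FZ; apply: Fiter. Qed.


Lemma FL e k : (2 <= e)%N -> F e (iter k der L).
Proof. by move=> h; apply: Fmono h (Fgen false k). Qed.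
Lemma FW e k : (3 <= e)%N -> F e (iter k der W).
Proof. by move=> h; apply: Fmono h (Fgen true k). Qed.
Lemma Fvac e : F e vac.
Proof. by apply: (Fnm' (s := [::])). Qed.
Lemma FLL e i j : (4 <= e)%N -> F e (nop (iter i der L) (iter j der L)).
Proof.
move=> h; have -> : nop (iter i der L) (iter j der L) = nm [:: (false,i);(false,j)].
  by rewrite /= /Defs.nop (Ycreate HVA).
exact: Fnm'.
Qed.

Lemma Fnth_cons e x l : F e x -> (forall i, F e (nth 0 l i)) ->
  forall i, F e (nth 0 (x :: l) i).
Proof. by move=> hx hl [|i] /=. Qed.
Lemma Fnth_nil e i : F e (nth 0 [::] i).
Proof. by rewrite nth_nil; apply: F0. Qed.

Ltac fnth := repeat (apply: Fnth_cons; last first); try exact: Fnth_nil.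

Lemma baseLL (i : nat) : F 3 (Y i L L).
Proof.
have [HLL _ _] := HOPE; rewrite (HLL i); fnth.
- by apply: FZ; apply: Fvac.
- exact: F0.
- by apply: FZ; apply: (FL (e:=3) 0).
- exact: (FL (e:=3) 1).
Qed.

Ltac fel := match goal with
 | |- F _ (_ + _) => apply: FD; fel
 | |- F _ (_ - _) => apply: FB; fel
 | |- F _ (_ *: _) => apply: FZ; fel
 | |- F _ 0 => exact: F0
 | |- F _ vac => exact: Fvac
 | |- F _ (Defs.nop _ _ _) => first [apply: (FLL 1 0); done | apply: (FLL 0 0); done]
 | |- F _ _ => first [apply: (FL 0); done | apply: (FL 1); done | apply: (FL 2); done
      | apply: (FL 3); done | apply: (FW 0); done | apply: (FW 1); done]
 end.

Lemma baseLW (i : nat) : F 4 (Y i L W).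
Proof. by have [_ HLW _] := HOPE; rewrite (HLW i); fnth; fel. Qed.

Lemma baseWW (i : nat) : F 5 (Y i W W).
Proof.
have [_ _ HWW] := HOPE; case: ifP HWW => _ HWW; rewrite (HWW i); fnth; fel.
Qed.

Lemma baseWL (i : nat) : F 4 (Y i W L).
Proof.
have [N0 H] := skew HVA L W i; rewrite (H N0) //.
apply: FZ; apply: Fsum => j; apply: FZ; apply: Fnegvac.
by have := baseLW (i + j).
Qed.

Lemma base (X Z : bool) (i : nat) : F (wt X + wt Z - 1) (Y i (gen X) (gen Z)).
Proof.
case: X; case: Z => /=.
- exact: baseWW.
- exact: baseWL.
- exact: baseLW.
- exact: (Fmono _ (baseLL i)).
Qed.

Lemma ope_gen (X Z : bool) (m i : nat) :
  F (wt X + wt Z - 1) (Y i (gen X) (iter m der (gen Z))).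
Proof.
elim: m i => [|m IH] i; first exact: base.
rewrite iterS.
have E := deriv HVA i (gen X) (iter m der (gen Z)).
have -> : Y i (gen X) (der (iter m der (gen Z))) =
   der (Y i (gen X) (iter m der (gen Z))) - Y i (der (gen X)) (iter m der (gen Z)).
  by rewrite E addrAC subrr add0r.
clear E.
apply: FB; first by apply: Fder.
rewrite (transl HVA); case: i => [|i].
  by rewrite mulr0z oppr0 scale0r; apply: F0.
apply: FZ.
have -> : (Posz i.+1 - 1) = i by lia.
exact: IH.
Qed.

Lemma ope_gen' (X Z : bool) (k m i : nat) :
  F (wt X + wt Z - 1) (Y i (iter k der (gen X)) (iter m der (gen Z))).
Proof.
apply: (posmode_der HVA (P := F _)) => //; [exact: F0 | exact: FZ | exact: ope_gen].
Qed.

Definition MLP N := forall s t, (deg s + deg t <= N)%N ->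
  (forall n : nat, F (deg s + deg t - 1) (Y n (nm s) (nm t))) /\
  F (deg s + deg t) (Y (-1) (nm s) (nm t)).

Lemma Mext_pos N : MLP N -> forall e f x z, (e + f <= N)%N -> F e x -> F f z ->
  forall n : nat, F (e + f - 1) (Y n x z).
Proof.
move=> H e f x z hef Fx Fz n.
have step : forall s, (deg s <= e)%N -> F (e + f - 1) (Y n (nm s) z).
  move=> s hs; apply: (F_lin (YlinR HVA n (nm s))) Fz => t ht.
  have [H1 _] := H s t (leq_trans (leq_add hs ht) hef).
  by apply: Fmono (H1 n); lia.
exact: (F_lin (YlinL HVA n z) step Fx).
Qed.

Lemma Mext_m1 N : MLP N -> forall e f x z, (e + f <= N)%N -> F e x -> F f z ->
  F (e + f) (Y (-1) x z).
Proof.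
move=> H e f x z hef Fx Fz.
have step : forall s, (deg s <= e)%N -> F (e + f) (Y (-1) (nm s) z).
  move=> s hs; apply: (F_lin (YlinR HVA (-1) (nm s))) Fz => t ht.
  have [_ H1] := H s t (leq_trans (leq_add hs ht) hef).
  by apply: Fmono H1; lia.
exact: (F_lin (YlinL HVA (-1) z) step Fx).
Qed.

Lemma Mext_any N : MLP N -> forall e f x z, (e + f <= N)%N -> F e x -> F f z ->
  forall k : int, F (e + f) (Y k x z).
Proof.
move=> H e f x z hef Fx Fz [n|r].
  by apply: Fmono (Mext_pos H hef Fx Fz n); lia.
rewrite (negmode HVA); apply: FZ; apply: (Mext_m1 H hef) => //.
exact: Fiter.
Qed.

Lemma Fneg_gen X k j e w : F e w -> F (wt X + e) (Y (Negz j) (iter k der (gen X)) w).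
Proof.
move=> h; rewrite (negmode HVA) -iterD; apply: FZ; exact: Fcons.
Qed.

Lemma deg_gen X k : deg [:: (X, k)] = wt X.
Proof. by rewrite /deg /= addn0. Qed.

Lemma deg_ge2 b k s : (2 <= deg ((b, k) :: s))%N.
Proof. by rewrite deg_cons; apply: leq_trans (wt_ge2 b) (leq_addr _ _). Qed.

Lemma ML N : MLP N.
Proof.
elim/ltn_ind: N => N IH s t hst.
case: s hst => [|[X k] s'] hst.
  split => [n|] /=.
    by rewrite (Yvac_ne HVA) //; apply: F0.
  by rewrite (Yvac1 HVA); apply: Fnm'; rewrite /deg /=.
have hN : (0 < N)%N by have := deg_ge2 X k s'; lia.
have IHN : MLP N.-1 by apply: IH; case: N hN {hst}.
have wX := wt_ge2 X.
case: s' hst => [|[Z2 m2] s''] hst.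
  rewrite deg_gen in hst *; rewrite nm_gen; split.
    apply: (posmode_der HVA (P := F _)); [exact: F0 | exact: FZ | move=> j].
    case: t hst => [|[Z m] t'] hst.
      by rewrite /= (Ypos_vac HVA); apply: F0.
    rewrite deg_cons in hst *.
    have wZ := wt_ge2 Z.
    have [N1 HB] := borch_n0 HVA (gen X) (iter m der (gen Z)) (nm t') j (-1).
    have E := HB N1 (leqnn _).
    change (nm ((Z, m) :: t')) with (Y (-1) (iter m der (gen Z)) (nm t')).
    rewrite -[Y j _ _](subrK (Y (-1) (iter m der (gen Z)) (Y j (gen X) (nm t')))) E.
    apply: FD.
      apply: Fsum => i; apply: FZ.
      apply: Fmono (Mext_any IHN _ (ope_gen X Z m i) (Fnm t') _); lia.
    have := IHN [:: (X, 0)] t'.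
    rewrite nm_gen deg_gen /= => /(_ ltac:(lia)) [/(_ j) G _].
    by apply: Fmono (Fcons Z m G); lia.
  by apply: (Fnm' (s := (X, k) :: t)); rewrite deg_cons.
set s' := (Z2, m2) :: s'' in hst *.
have hs' : (2 <= deg s')%N by apply: deg_ge2.
rewrite deg_cons in hst *.
change (nm ((X, k) :: s')) with (Y (-1) (iter k der (gen X)) (nm s')).
have G1 : forall j : nat, F (wt X + deg t - 1) (Y j (iter k der (gen X)) (nm t)).
  move=> j; have := IHN [:: (X, k)] t.
  by rewrite nm_gen deg_gen => /(_ ltac:(lia)) [+ _]; apply.
split.
  move=> n.
  have [N1 HB] := borch_m0 HVA (iter k der (gen X)) (nm s') (nm t) (-1) n.
  rewrite (HB N1) //; apply: Fsum => j; apply: FZ; apply: FB.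
    have -> : (-1 - Posz j) = Negz j by rewrite NegzE; lia.
    have -> : (Posz n + Posz j) = Posz (n + j) by [].
    have := IHN s' t => /(_ ltac:(lia)) [/(_ (n + j)) G _].
    by apply: Fmono (Fneg_gen X k j G); lia.
  apply: FZ.
  by apply: Fmono (Mext_any IHN _ (Fnm s') (G1 j) _); lia.
have [N1 HB] := borch_m0 HVA (iter k der (gen X)) (nm s') (nm t) (-1) (-1).
rewrite (HB N1) //; apply: Fsum => j; apply: FZ; apply: FB.
  have -> : (-1 - Posz j) = Negz j by rewrite NegzE; lia.
  have G := Mext_any IHN (e := deg s') (f := deg t) ltac:(lia) (Fnm s') (Fnm t) (-1 + ((j : nat) : int)).
  by apply: Fmono (Fneg_gen X k j G); lia.
apply: FZ.
by apply: Fmono (Mext_any IHN _ (Fnm s') (G1 j) _); lia.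
Qed.

Lemma der_lin : linear der.
Proof. exact: (YlinL HVA (-2) vac). Qed.

Notation Uab := (U vac Y W).

Definition Gs (t : seq (K * (nat * nat))) : V :=
  \sum_(p <- t) p.1 *: iter p.2.2 der (Uab (p.2.1).*2 0).
Definition Mg x := exists t, F 5 (x - Gs t).

Lemma MgF x : F 5 x -> Mg x.
Proof. by move=> h; exists [::]; rewrite /Gs big_nil subr0. Qed.
Lemma MgD x y : Mg x -> Mg y -> Mg (x + y).
Proof.
move=> [t1 h1] [t2 h2]; exists (t1 ++ t2); rewrite /Gs big_cat /=.
have -> : x + y - (Gs t1 + Gs t2) = (x - Gs t1) + (y - Gs t2).
  by rewrite opprD addrACA.
exact: FD.
Qed.
Lemma MgZ k x : Mg x -> Mg (k *: x).
Proof.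
move=> [t h]; exists (map (fun p => (k * p.1, p.2)) t).
have -> : Gs (map (fun p => (k * p.1, p.2)) t) = k *: Gs t.
  by rewrite /Gs big_map scaler_sumr; apply: eq_bigr => p _; rewrite scalerA.
by rewrite -scalerBr; apply: FZ.
Qed.
Lemma MgB x y : Mg x -> Mg y -> Mg (x - y).
Proof. by move=> hx hy; apply: MgD => //; rewrite -scaleN1r; apply: MgZ. Qed.
Lemma Mgder x : Mg x -> Mg (der x).
Proof.
move=> [t h]; exists (map (fun p => (p.1, (p.2.1, p.2.2.+1))) t).
have -> : Gs (map (fun p => (p.1, (p.2.1, p.2.2.+1))) t) = der (Gs t).
  rewrite /Gs big_map (lin_sum der_lin); apply: eq_bigr => p _.
  by rewrite (linZ der_lin) /= ?iterS.
by rewrite -(linB der_lin); apply: Fder.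
Qed.
Lemma MgU n : Mg (Uab n.*2 0).
Proof.
exists [:: (1, (n, 0%N))]; rewrite /Gs big_seq1 /= scale1r subrr; exact: F0.
Qed.

Lemma derU a b : der (Uab a b) = Uab a.+1 b + Uab a b.+1.
Proof. by rewrite /U /Defs.nop (deriv HVA) -!iterS. Qed.

Lemma skewU a b : F 5 (Uab a b - Uab b a).
Proof.
have [N1 HB] := borch_n0 HVA (iter a der W) (iter b der W) vac (-1) (-1).
have E := HB N1 (leqnn _); rewrite !(Ycreate HVA) in E.
rewrite /U /Defs.nop E; apply: Fsum => i; apply: FZ.
have -> : (-1 + -1 - Posz i) = Negz i.+1 by rewrite NegzE; lia.
apply: Fnegvac; exact: (ope_gen' true true a b i).
Qed.

Lemma opp_help (A B C : V) : (A + B) - (A - C) = B + C.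
Proof. by rewrite opprB addrC addrA subrK addrC. Qed.

Lemma MgU_all n : forall i, (i <= n)%N -> Mg (Uab (n - i) i).
Proof.
elim/ltn_ind: n => n IH.
have Hder : forall i, (i < n)%N -> Mg (Uab (n - i) i + Uab (n - i.+1) i.+1).
  move=> i hi.
  have -> : (n - i = (n.-1 - i).+1)%N by lia.
  have -> : (n - i.+1 = n.-1 - i)%N by lia.
  rewrite -derU; apply: Mgder; apply: IH; lia.
have HA : forall i, (i <= n)%N -> Mg (Uab (n - i) i - (-1) ^+ i *: Uab n 0).
  elim=> [|i IHi] hi.
    by rewrite subn0 expr0 scale1r subrr; apply: MgF; apply: F0.
  have := MgB (Hder i hi) (IHi (ltnW hi)).
  by rewrite opp_help exprS mulN1r scaleNr opprK; apply.
have HB : Mg (Uab n 0).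
  case/boolP: (odd n) => hodd.
    have := MgD (HA n (leqnn n)) (MgF (skewU n 0)).
    rewrite subnn -signr_odd hodd expr1 scaleN1r opprK.
    have -> : Uab 0 n + Uab n 0 + (Uab n 0 - Uab 0 n) = 2%:R *: Uab n 0.
      by rewrite addrC addrA subrK scaler_nat mulr2n.
    move=> /(MgZ (2%:R)^-1); rewrite scalerA mulVf ?scale1r //.
    by rewrite pnatr_eq0.
  have E : (n./2).*2 = n by rewrite -[RHS](odd_double_half n) (negbTE hodd).
  by rewrite -E; apply: MgU.
move=> i hi.
have -> : Uab (n - i) i = (Uab (n - i) i - (-1) ^+ i *: Uab n 0) + (-1) ^+ i *: Uab n 0.
  by rewrite subrK.
by apply: MgD; [apply: HA | apply: MgZ].
Qed.

Lemma U_decomp a b : exists t, F 5 (Uab a b - Gs t).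
Proof. by have := MgU_all (leq_addl a b); rewrite addnK. Qed.
End W3.

Section Main.
Variable K : numFieldType.
Variable V : lmodType K.
Variables (vac : V) (Y : int -> V -> V -> V).
Hypothesis HVA : vertex_algebra vac Y.
Variables (c : K) (L W : V).
Hypothesis HOPE : W3_ope vac Y c L W.
Variable theta : V -> V.
Hypothesis Hth : va_automorphism vac Y theta.
Hypothesis HthL : theta L = L.
Hypothesis HthW : theta W = - W.

Notation der := (der vac Y).
Notation nop := (nop Y).
Notation gen := (W3gen L W).
Notation nm := (nmono vac Y gen).
Notation og := (orb_gen vac Y L W).
Notation S := (in_strong_span vac Y og).
Notation Uab := (U vac Y W).
Notation F := (F vac Y L W).
Notation Gs := (Gs vac Y W).
Definition cntW (s : seq (bool * nat)) := count (fun p : bool * nat => p.1) s.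

Lemma th_lin : linear theta. Proof. by case: Hth. Qed.
Lemma th_Y n a b : theta (Y n a b) = Y n (theta a) (theta b). Proof. by case: Hth. Qed.
Lemma th_vac : theta vac = vac. Proof. by case: Hth. Qed.
Lemma th_der x : theta (der x) = der (theta x).
Proof. by rewrite /Defs.der th_Y th_vac. Qed.
Lemma th_iter k x : theta (iter k der x) = iter k der (theta x).
Proof. by elim: k => //= k IH; rewrite th_der IH. Qed.
Lemma iterZ k a x : iter k der (a *: x) = a *: iter k der x.
Proof. by elim: k => //= k IH; rewrite IH (linZ (der_lin HVA)). Qed.
Lemma th_gen b : theta (gen b) = (-1) ^+ b *: gen b.
Proof. by case: b => /=; rewrite ?HthW ?HthL ?expr1 ?scaleN1r ?expr0 ?scale1r. Qed.

Lemma th_nm s : theta (nm s) = (-1) ^+ (cntW s) *: nm s.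
Proof.
elim: s => [|[b k] s IH] /=; first by rewrite th_vac expr0 scale1r.
rewrite /Defs.nop th_Y th_iter th_gen iterZ IH (YLZ HVA) (YRZ HVA) scalerA -exprD.
done.
Qed.

Lemma th_nm_even s : ~~ odd (cntW s) -> theta (nm s) = nm s.
Proof. by move=> h; rewrite th_nm -signr_odd (negbTE h) expr0 scale1r. Qed.

Lemma th_U a b : theta (Uab a b) = Uab a b.
Proof.
rewrite /U /Defs.nop th_Y !th_iter HthW -scaleN1r !iterZ (YLZ HVA) (YRZ HVA).
by rewrite scalerA mulrNN mulr1 scale1r.
Qed.

Lemma th_Gs t : theta (Gs t) = Gs t.
Proof.
rewrite /Gs (lin_sum th_lin); apply: eq_bigr => p _.
by rewrite (linZ th_lin) th_iter th_U.
Qed.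

Lemma S0 : S 0. Proof. by exists [::]; rewrite big_nil. Qed.
Lemma SD x y : S x -> S y -> S (x + y).
Proof. by move=> [t1 ->] [t2 ->]; exists (t1 ++ t2); rewrite big_cat. Qed.
Lemma SZ k x : S x -> S (k *: x).
Proof.
move=> [t ->]; exists (map (fun p => (k * p.1, p.2)) t).
by rewrite big_map scaler_sumr; apply: eq_bigr => p _; rewrite scalerA.
Qed.
Lemma SB x y : S x -> S y -> S (x - y).
Proof. by move=> hx hy; apply: SD => //; rewrite -scaleN1r; apply: SZ. Qed.
Lemma Ssum_seq (I : eqType) (r : seq I) (G : I -> V) :
  (forall i, i \in r -> S (G i)) -> S (\sum_(i <- r) G i).
Proof.
move=> H; rewrite big_seq; apply: big_rec => [|j x hj Hx]; [exact: S0 |].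
by apply: SD => //; apply: H.
Qed.
Lemma Svac : S vac.
Proof. by exists [:: (1, [::])]; rewrite big_seq1 scale1r. Qed.
Lemma Scons o k x : S x -> S (nop (iter k der (og o)) x).
Proof.
move=> [t ->]; exists (map (fun p => (p.1, (o, k) :: p.2)) t).
rewrite /Defs.nop (lin_sum (YlinR HVA (-1) _)) big_map; apply: eq_bigr => p _.
by rewrite (linZ (YlinR HVA (-1) _)).
Qed.
Lemma SconsL k x : S x -> S (nop (iter k der L) x).
Proof. exact: (Scons None). Qed.
Lemma SconsU n k x : S x -> S (nop (iter k der (Uab n.*2 0)) x).
Proof. exact: (Scons (Some n)). Qed.

Lemma FixS d : (forall s, (deg s <= d)%N -> ~~ odd (cntW s) -> S (nm s)) ->
  forall x, F d x -> theta x = x -> S x.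
Proof.
move=> Q x [t [ht Ex]] hfix.
have E2 : x = (2%:R)^-1 *: (x + theta x).
  by rewrite hfix -mulr2n -scaler_nat scalerA mulVf ?scale1r // pnatr_eq0.
rewrite E2; apply: SZ; rewrite {2}Ex (lin_sum th_lin) {1}Ex -big_split /=.
apply: Ssum_seq => p hp; rewrite (linZ th_lin) th_nm -scalerDr; apply: SZ.
rewrite -(signr_odd _ (cntW p.2)); case: (boolP (odd (cntW p.2))) => hodd.
  by rewrite expr1 scaleN1r subrr; apply: S0.
rewrite expr0 scale1r.
have -> : nm p.2 + nm p.2 = 2%:R *: nm p.2 by rewrite scaler_nat mulr2n.
apply: SZ; apply: Q.
  by move/allP: ht => /(_ p hp).
done.
Qed.


Lemma gl (x y z : V) : x - y + z - x = z - y.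
Proof. by rewrite addrAC [x - y - x]addrAC subrr add0r addrC. Qed.

Lemma mainQ d : forall s, (deg s <= d)%N -> ~~ odd (cntW s) -> S (nm s).
Proof.
elim/ltn_ind: d => d IH s hs hev.
have IHs : forall s', (deg s' < deg s)%N -> ~~ odd (cntW s') -> S (nm s').
  move=> s' h; apply: (IH (deg s')) => //; exact: leq_trans h hs.
case: s hs hev IHs => [|[b k] s'] hs hev IHs; first exact: Svac.
have FixD : forall x, F (deg ((b, k) :: s') - 1) x -> theta x = x -> S x.
  apply: FixS => s0 h0 e0; apply: (IH (deg s0)) => //.
  have := deg_ge2 b k s'; lia.
have MLd : MLP vac Y L W (deg ((b, k) :: s')) by move=> s0 t0; apply: (ML HVA HOPE).
case: b hev hs IHs FixD MLd => hev hs IHs FixD MLd; last first.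
  by apply: SconsL; apply: IHs => //; rewrite ?deg_cons /wt; lia.
case: s' hev hs IHs FixD MLd => [|[b2 j] r] hev hs IHs FixD MLd.
  by rewrite /cntW /= in hev.
rewrite !deg_cons /wt in hs IHs FixD MLd *.
case: b2 hev hs IHs FixD MLd => /= hev hs IHs FixD MLd.
  have hevr : ~~ odd (cntW r) by move: hev; rewrite /cntW /= ?negbK ?add0n.
  have hz : S (nm r) by apply: IHs => //; lia.
  have hthz : theta (nm r) = nm r by apply: th_nm_even.
  have hP : forall (a n : nat), F (3 + deg r - 1) (Y n (iter a der W) (nm r)).
    move=> a n; apply: (Mext_pos HVA (e := 3) (f := deg r) MLd) => //; first lia.
      exact: (FW HVA L W a (leqnn 3)).
    exact: Fnm.
  have hA : forall (a : nat) x (kk : int), F (3 + deg r - 1) x ->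
      F (3 + (3 + deg r) - 1) (Y kk (iter a der W) x).
    move=> a x kk hx.
    apply: Fmono (Mext_any HVA (e := 3) (f := 3 + deg r - 1) MLd _ (FW HVA L W a (leqnn 3)) hx kk) => //; lia.
  have [t Ht] := U_decomp HVA HOPE k j.
  have hthy : theta (Uab k j - Gs t) = Uab k j - Gs t.
    by rewrite (linB th_lin) th_U th_Gs.
  have SQ : S (Y (-1) (Uab k j) (nm r)).
    rewrite -[Uab k j](subrK (Gs t)) (YLD HVA); apply: SD.
      apply: FixD; last by rewrite th_Y hthy hthz.
      apply: Fmono (Mext_m1 HVA (e := 5) (f := deg r) MLd _ Ht (Fnm vac Y L W r)) => //; lia.
    rewrite /Gs (YLsum HVA); apply: Ssum_seq => p _; rewrite (YLZ HVA); apply: SZ.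
    exact: SconsU.
  set Q := Y (-1) (Uab k j) (nm r).
  have E : forall x, S (Q - (Q - x)) -> S x by move=> x; rewrite opprB addrC subrK.
  apply: E; apply: SB => //; apply: FixD; last first.
    rewrite (linB th_lin) th_Y th_U hthz.
    by rewrite (th_nm_even (s := (true, k) :: (true, j) :: r)).
  have [N1 HB] := borch_m0 HVA (iter k der W) (iter j der W) (nm r) (-1) (-1).
  rewrite /Q /U /Defs.nop (HB N1.+1) // big_ord_recl /=.
  rewrite expr0 binz0 mulr1 scale1r subr0 addr0.
  rewrite gl; apply: FB.
    apply: Fsum => i; apply: FZ; apply: FB.
      have -> : (-1 + Posz (bump 0 i)) = Posz i by rewrite /bump /=; lia.
      by apply: hA; apply: hP.
    by apply: FZ; apply: hA; apply: hP.
  by apply: FZ; apply: hA; apply: hP.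
set A := nop (iter j der L) (nm ((true, k) :: r)).
have SA : S A.
  by apply: SconsL; apply: IHs => //; rewrite ?deg_cons /wt; lia.
have E : forall x, S (A + (x - A)) -> S x by move=> x; rewrite addrC subrK.
apply: E; apply: SD => //; apply: FixD; last first.
  rewrite (linB th_lin) (th_nm_even (s := (true, k) :: (false, j) :: r)) //.
  by rewrite /A /Defs.nop th_Y th_iter HthL th_nm_even.
have [N1 HB] := borch_n0 HVA (iter k der W) (iter j der L) (nm r) (-1) (-1).
rewrite (_ : A = Y (-1) (iter j der L) (Y (-1) (iter k der W) (nm r))) //.
rewrite /Defs.nop (HB N1) //; apply: Fsum => i; apply: FZ.
apply: Fmono (Mext_any HVA (e := 4) (f := deg r) MLd _ (ope_gen' HVA HOPE true false k j i) (Fnm vac Y L W r) _) => //; lia.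
Qed.

Lemma th_og o : theta (og o) = og o.
Proof. by case: o => [n|] /=; rewrite ?HthL ?th_U. Qed.

Lemma th_nmo s : theta (nmono vac Y og s) = nmono vac Y og s.
Proof.
elim: s => [|[o k] s IH] /=; first exact: th_vac.
by rewrite /Defs.nop th_Y th_iter th_og IH.
Qed.

Lemma S_fixed x : S x -> theta x = x.
Proof.
move=> [t ->]; rewrite (lin_sum th_lin); apply: eq_bigr => p _.
by rewrite (linZ th_lin) th_nmo.
Qed.
End Main.

Lemma all_le_sumn (T : Type) (f : T -> nat) (t : seq T) :
  all (fun p => (f p <= sumn (map f t))%N) t.
Proof.
elim: t => //= a t IH; rewrite leq_addr /=.
by apply: sub_all IH => p h; apply: leq_trans h (leq_addl _ _).
Qed.

Theorem lemma4p1 (R : realType) (c : R[i]) (V : lmodType R[i]) (vac : V)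
    (Y : int -> V -> V -> V) (L W : V) (theta : V -> V) :
  is_W3 vac Y c L W ->
  va_automorphism vac Y theta -> theta L = L -> theta W = - W ->
  (forall x : V, theta x = x <-> in_strong_span vac Y (orb_gen vac Y L W) x).
Proof.
move=> [HVA HOPE [HPBW _]] Hth HL HW x; split; last first.
  exact: (S_fixed HVA Hth HL HW (x := x)).
move=> hx; have [t [_ Ex]] := HPBW x.
apply: (FixS HVA Hth HL HW (d := sumn (map (fun p => deg p.2) t))) => //.
  by move=> s hs he; apply: (mainQ HVA HOPE Hth HL HW hs he).
exists t; split => //.
exact: (all_le_sumn (fun p : R[i] * seq (bool * nat) => deg p.2)).
Qed.
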